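(* Let $\epsilon\in(0,1)$, let $x:\mathcal{A}\to(0,1)$ be given, and put $\gamma:=\frac{\log_2 M}{\epsilon}$. Let $T$ be a table and $C_T$ the event-log of Algorithm 2 on $T$. If a partial witness tree of weight at least $\gamma$, all of whose non-root vertices $v$ satisfy $x'([v])\ge\frac{1}{4m}$, occurs in $C_T$, then a partial witness tree of weight in $[\gamma,2\gamma]$ occurs in $C_T$.
   Context: Setting: $\mathcal{P}=\{P_1,\dots,P_n\}$ is a finite set of mutually independent discrete random variables with finite domains; $\mathcal{A}$ is a set of $m$ events determined by them; $\mathrm{vbl}(A)$ is the minimal set of variables determining $A$; the dependency graph joins $A\neq B$ iff $\mathrm{vbl}(A)\cap\mathrm{vbl}(B)\neq\emptyset$; $\Gamma(A)$ is the neighborhood and $\Gamma^+(A)=\Gamma(A)\cup\{A\}$. $x'(A)=x(A)\prod_{B\in\Gamma(A)}(1-x(B))$; $\overline{\mathcal{A}}=\{A: x'(A)\ge\frac{1}{4m}\}$; $M=\max\{n,4m,4\sum_{A\in\overline{\mathcal{A}}}\frac{2|\mathrm{vbl}(A)|}{x'(A)}\cdot\frac{x(A)}{1-x(A)}\}$. Binary trees: for each $A$ a rooted binary tree $\mathbb{B}_A$ is fixed, with vertices labeled by nonempty subsets of $\mathrm{vbl}(A)$: root labeled $\mathrm{vbl}(A)$, leaves labeled by singletons, each non-leaf vertex has two children with disjoint labels whose union is its label; $\mathbb{B}_A$ also denotes the set of labels. Partial witness tree: finite rooted tree, root labeled by some $S\in\mathbb{B}_A$ ($A\in\mathcal{A}$),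 other vertices labeled by events; children of the root are labeled by events $B$ with $\mathrm{vbl}(B)\cap S\ne\emptyset$; children of a non-root vertex labeled $B$ are labeled by elements of $\Gamma^+(B)$. $[v]$ denotes the label of a non-root vertex $v$. The weight of an event is $w(A)=-\log_2x'(A)$ and the weight of a partial witness tree is the sum of $w([v])$ over its non-root vertices $v$. Table and log: $T$ gives for each variable $p$ a sequence $T(p,1),T(p,2),\dots$ of values. Algorithm 2: pointers $t_p=1$; while some event happens under $p=T(p,t_p)$ for all $p$, pick one such event $A$ by a fixed deterministic rule and increment $t_p$ for all $p\in\mathrm{vbl}(A)$. The event-log $C_T(1),C_T(2),\dots$ lists the picked events. For a log $C$, step $t$ and $S\in\mathbb{B}_{C(t)}$, $\tau_C(t,S)$ is built by starting with a root labeled $S$ and, for $i=t-1,\dots,1$: if some non-root vertex $v$ has $C(i)\in\Gamma^+([v])$, attach a child labeled $C(i)$ to such a $v$ of maximum depth (ties arbitrary); else if $S\cap\mathrm{vbl}(C(i))\ne\emptyset$, attach a child labeled $C(i)$ to the root; else do nothing. A partial witness tree $\tau_S$ occurs in $C$ if $\tau_S=\tau_C(t,S)$ for some $t$ with $S\in\mathbb{B}_{C(t)}$. *)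

(* Defs.v *)
From HB Require Import structures.
From mathcomp Require Import all_boot all_order all_algebra.
From mathcomp Require Import reals exp.
Set Implicit Arguments. Unset Strict Implicit. Unset Printing Implicit Defensive.
Import Order.TTheory GRing.Theory Num.Theory.
Local Open Scope ring_scope.

Definition determines (n : nat) (D : 'I_n -> finType)
  (S : {set 'I_n}) (E : (forall p, D p) -> bool) : Prop :=
  forall a b : (forall p, D p), (forall p, p \in S -> a p = b p) -> E a = E b.

Definition is_vbl (n m : nat) (D : 'I_n -> finType)
  (A : 'I_m -> (forall p, D p) -> bool) (vbl : 'I_m -> {set 'I_n}) (i : 'I_m) : Prop :=
  determines (vbl i) (A i) /\
  (forall S : {set 'I_n}, S \subset vbl i -> determines S (A i) -> S = vbl i).

Definition Gamma (n m : nat) (vbl : 'I_m -> {set 'I_n}) (i : 'I_m) : {set 'I_m} :=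
  [set j | (j != i) && (vbl i :&: vbl j != set0)].
Definition GammaP (n m : nat) (vbl : 'I_m -> {set 'I_n}) (i : 'I_m) : {set 'I_m} :=
  i |: Gamma vbl i.

Definition log2 (R : realType) (y : R) : R := ln y / ln 2.

Definition xp (R : realType) (n m : nat) (vbl : 'I_m -> {set 'I_n}) (x : 'I_m -> R)
  (i : 'I_m) : R := x i * \prod_(j in Gamma vbl i) (1 - x j).

Definition wgt (R : realType) (n m : nat) (vbl : 'I_m -> {set 'I_n}) (x : 'I_m -> R)
  (i : 'I_m) : R := - log2 (xp vbl x i).

Definition in_bar (R : realType) (n m : nat) (vbl : 'I_m -> {set 'I_n}) (x : 'I_m -> R)
  (i : 'I_m) : bool := (4 * m)%:R^-1 <= xp vbl x i.

Definition Mconst (R : realType) (n m : nat) (vbl : 'I_m -> {set 'I_n}) (x : 'I_m -> R) : R :=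
  Num.max (Num.max (n%:R) ((4 * m)%:R))
    (4 * \sum_(i < m | in_bar vbl x i)
          ((2 * #|vbl i|%:R / xp vbl x i) * (x i / (1 - x i)))).

Inductive btree (n : nat) := BLeaf of 'I_n | BNode of btree n & btree n.

Fixpoint blabel (n : nat) (b : btree n) : {set 'I_n} :=
  match b with BLeaf p => [set p] | BNode l r => blabel l :|: blabel r end.

(* leaves are singletons (by construction); children of a node have disjoint
   labels whose union is the node's label *)
Fixpoint bvalid (n : nat) (b : btree n) : bool :=
  match b with
  | BLeaf _ => true
  | BNode l r => [disjoint blabel l & blabel r] && bvalid l && bvalid r
  end.

Fixpoint blabels (n : nat) (b : btree n) : seq {set 'I_n} :=
  blabel b :: match b with BLeaf _ => [::] | BNode l r => blabels l ++ blabels r end.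

(* non-root vertices: labeled by events; a partial witness tree is a pair
   (root label S, list of subtrees hanging from the root) *)
Inductive etree (m : nat) := ENode of 'I_m & seq (etree m).

Definition label (m : nat) (t : etree m) : 'I_m := let: ENode l _ := t in l.

Definition pwt (n m : nat) := ({set 'I_n} * seq (etree m))%type.

(* all vertices of a tree, with their path (sequence of child indices) *)
Fixpoint vtree (m : nat) (t : etree m) : seq (seq nat * 'I_m) :=
  match t with
  | ENode l ch =>
      ([::], l) ::
      (fix vf (j : nat) (cs : seq (etree m)) :=
         match cs with
         | [::] => [::]
         | c :: cs' => [seq (j :: q.1, q.2) | q <- vtree c] ++ vf j.+1 cs'
         end) 0%N ch
  end.

Fixpoint vforest_from (m : nat) (j : nat) (ts : seq (etree m)) : seq (seq nat * 'I_m) :=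
  match ts with
  | [::] => [::]
  | c :: cs => [seq (j :: q.1, q.2) | q <- vtree c] ++ vforest_from j.+1 cs
  end.

(* non-root vertices of a partial witness tree with children ts of the root;
   the path of a vertex has length equal to its depth *)
Definition vforest (m : nat) (ts : seq (etree m)) := vforest_from 0%N ts.

Fixpoint wf_tree (n m : nat) (vbl : 'I_m -> {set 'I_n}) (t : etree m) : bool :=
  match t with
  | ENode l ch => all (fun c => label c \in GammaP vbl l) ch && all (wf_tree vbl) ch
  end.

Definition is_pwt (n m : nat) (vbl : 'I_m -> {set 'I_n}) (Bt : 'I_m -> btree n)
  (tau : pwt n m) : Prop :=
  (exists a : 'I_m, tau.1 \in blabels (Bt a)) /\
  all (fun c => vbl (label c) :&: tau.1 != set0) tau.2 /\
  all (wf_tree vbl) tau.2.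

Definition weight (R : realType) (n m : nat) (vbl : 'I_m -> {set 'I_n}) (x : 'I_m -> R)
  (tau : pwt n m) : R := \sum_(q <- vforest tau.2) wgt vbl x q.2.

Definition all_bar (R : realType) (n m : nat) (vbl : 'I_m -> {set 'I_n}) (x : 'I_m -> R)
  (tau : pwt n m) : bool := all (fun q => in_bar vbl x q.2) (vforest tau.2).

(* add a child labeled e at the end of the children list of the vertex at path p
   (p = [::] is the root) *)
Fixpoint add_forest (m : nat) (e : 'I_m) (p : seq nat) (ts : seq (etree m))
  : seq (etree m) :=
  match p with
  | [::] => rcons ts (ENode e [::])
  | k :: p' =>
      [seq (let: (j, t) := jt in
            if j == k then (let: ENode l ch := t in ENode l (add_forest e p' ch)) else t)
      | jt <- zip (iota 0 (size ts)) ts]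
  end.

(* one step i of the construction of tau_C(t,S), with C(i) = e; ties are
   arbitrary, hence this is a relation *)
Definition attach (n m : nat) (vbl : 'I_m -> {set 'I_n}) (S : {set 'I_n}) (e : 'I_m)
  (ts ts' : seq (etree m)) : Prop :=
  let cand := [seq q <- vforest ts | e \in GammaP vbl q.2] in
  if cand != [::] then
    exists q, q \in cand /\ (forall q', q' \in cand -> (size q'.1 <= size q.1)%N) /\
              ts' = add_forest e q.1 ts
  else if vbl e :&: S != set0 then ts' = add_forest e [::] ts
  else ts' = ts.

Fixpoint process (n m : nat) (vbl : 'I_m -> {set 'I_n}) (S : {set 'I_n})
  (L : seq 'I_m) (ts res : seq (etree m)) : Prop :=
  match L with
  | [::] => res = ts
  | e :: L' => exists ts', attach vbl S e ts ts' /\ process vbl S L' ts' res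
  end.

(* table T : T p j is the j-th value (j >= 1) for variable p; pointer states s *)
Definition asg (n : nat) (D : 'I_n -> finType) (T : forall p : 'I_n, nat -> D p)
  (s : 'I_n -> nat) : forall p, D p := fun p => T p (s p).

(* the deterministic selection rule, as a function of the current pointer state:
   it returns None iff no event happens, and otherwise an event that happens *)
Definition rule_spec (n m : nat) (D : 'I_n -> finType) (A : 'I_m -> (forall p, D p) -> bool)
  (T : forall p : 'I_n, nat -> D p) (rule : ('I_n -> nat) -> option 'I_m) : Prop :=
  forall s, (rule s = None <-> (forall i, ~~ A i (asg T s))) /\
            (forall i, rule s = Some i -> A i (asg T s)).

(* pointer state after k iterations (None if the algorithm stopped earlier) *)
Fixpoint alg_state (n m : nat) (vbl : 'I_m -> {set 'I_n})
  (rule : ('I_n -> nat) -> option 'I_m) (k : nat) : option ('I_n -> nat) :=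
  match k with
  | 0 => Some (fun _ => 1%N)
  | k'.+1 =>
      match alg_state vbl rule k' with
      | None => None
      | Some s => match rule s with
                  | None => None
                  | Some i => Some (fun p => if p \in vbl i then (s p).+1 else s p)
                  end
      end
  end.

(* event-log: C t (t >= 1) is the event picked at iteration t, None if no such step *)
Definition event_log (n m : nat) (vbl : 'I_m -> {set 'I_n})
  (rule : ('I_n -> nat) -> option 'I_m) (t : nat) : option 'I_m :=
  match t with
  | 0 => None
  | t'.+1 => obind rule (alg_state vbl rule t')
  end.

(* tau occurs in the log C : tau = tau_C(t,S) for some t with S in B_{C(t)}
   (for some resolution of the ties) *)
Definition occurs (n m : nat) (vbl : 'I_m -> {set 'I_n}) (Bt : 'I_m -> btree n)
  (C : nat -> option 'I_m) (tau : pwt n m) : Prop :=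
  exists (t : nat) (a : 'I_m),
    C t = Some a /\ tau.1 \in blabels (Bt a) /\
    process vbl tau.1 (pmap C (rev (iota 1 t.-1))) [::] tau.2.

(* Main.v *)
Require Import Defs.
From HB Require Import structures.
From mathcomp Require Import all_boot all_order all_algebra.
From mathcomp Require Import reals exp.
From mathcomp Require Import zify ring lra.
Import Order.TTheory GRing.Theory Num.Theory.
Set Implicit Arguments. Unset Strict Implicit. Unset Printing Implicit Defensive.

Section Trees.
Variables (n m : nat) (vbl : 'I_m -> {set 'I_n}).

Definition labs (ts : seq (etree m)) : seq 'I_m := map snd (vforest ts).

Lemma vtree_eq (l : 'I_m) (ch : seq (etree m)) : vtree (ENode l ch) = ([::], l) :: vforest_from 0 ch.
Proof. rewrite /=; congr (_ :: _); elim: ch 0%N => //= c ch IH j; by rewrite IH. Qed.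

Lemma vforest_from_cons j (c : etree m) cs :
  vforest_from j (c :: cs) = [seq (j :: q.1, q.2) | q <- vtree c] ++ vforest_from j.+1 cs.
Proof. by []. Qed.

Lemma vforest_cat j (a b : seq (etree m)) :
  vforest_from j (a ++ b) = vforest_from j a ++ vforest_from (j + size a) b.
Proof.
elim: a j => [|c a IH] j /=; first by rewrite addn0.
by rewrite IH catA addSnnS.
Qed.

Lemma labs_from j (ts : seq (etree m)) : map snd (vforest_from j ts) = map snd (vforest_from 0 ts).
Proof.
elim: ts j => [|c cs IH] j //=.
by rewrite !map_cat -!map_comp IH (IH 1%N).
Qed.

Lemma labs_cat (a b : seq (etree m)) : labs (a ++ b) = labs a ++ labs b.
Proof. by rewrite /labs /vforest vforest_cat map_cat labs_from. Qed.

Lemma labs_cons (c : etree m) cs : labs (c :: cs) = map snd (vtree c) ++ labs cs.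
Proof. by rewrite /labs /vforest /= map_cat -map_comp labs_from. Qed.

Lemma mem_vforest j (ts : seq (etree m)) k p l : (k :: p, l) \in vforest_from j ts ->
  (j <= k < j + size ts)%N /\
  (p, l) \in vtree (nth (ENode l [::]) ts (k - j)).
Proof.
elim: ts j => [|c cs IH] j //=.
rewrite mem_cat => /orP [/mapP [[q1 q2] Hq [-> -> ->]] | /IH [H1 H2]].
  by rewrite leqnn subnn /= addnS ltnS leq_addr.
split.
  by move: H1; rewrite addnS addSn => /andP [/ltnW -> ->].
move: H1 => /andP [H1 _].
have -> : (k - j = (k - j.+1).+1)%N by rewrite subnS prednK // subn_gt0.
by [].
Qed.

Definition modif (e : 'I_m) (p : seq nat) (t : etree m) :=
  let: ENode l ch := t in ENode l (add_forest e p ch).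

Lemma map_zip_iota_out (g : etree m -> etree m) k j (cs : seq (etree m)) :
  (k < j)%N ->
  [seq (let: (i, t) := jt in if i == k then g t else t) | jt <- zip (iota j (size cs)) cs] = cs.
Proof.
elim: cs j => [|c cs IH] j Hj //=.
by rewrite (gtn_eqF Hj) IH // ltnW.
Qed.

Lemma map_zip_iota (g : etree m -> etree m) d k j (ts : seq (etree m)) :
  (j <= k < j + size ts)%N ->
  [seq (let: (i, t) := jt in if i == k then g t else t) | jt <- zip (iota j (size ts)) ts]
  = take (k - j) ts ++ g (nth d ts (k - j)) :: drop (k - j).+1 ts.
Proof.
elim: ts j => [|c cs IH] j /=; first by rewrite addn0 => /andP [H1 H2]; move: (leq_trans H2 H1); rewrite ltnn.
move=> /andP [H1 H2].
case: (ltngtP k j) => Hkj.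
- by move: (leq_trans Hkj H1); rewrite ltnn.
- rewrite IH; last by rewrite Hkj addSnnS.
  have -> : (k - j = (k - j.+1).+1)%N by rewrite subnS prednK // subn_gt0.
  by [].
- subst k; rewrite subnn /= drop0; congr (_ :: _).
  exact: map_zip_iota_out.
Qed.

Lemma add_forest_cons e k p (ts : seq (etree m)) d : (k < size ts)%N ->
  add_forest e (k :: p) ts = take k ts ++ modif e p (nth d ts k) :: drop k.+1 ts.
Proof.
move=> Hk; have := map_zip_iota (modif e p) d (j := 0) (k := k) (ts := ts).
rewrite subn0 add0n Hk => <- //.
Qed.

Lemma labs_vtree (l : 'I_m) ch : map snd (vtree (ENode l ch)) = l :: labs ch.
Proof. by rewrite vtree_eq. Qed.

Lemma labs_add e p (ts : seq (etree m)) :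
  (p = [::] \/ exists l, (p, l) \in vforest ts) ->
  perm_eq (labs (add_forest e p ts)) (e :: labs ts).
Proof.
elim: p ts => [|k p IH] ts.
  move=> _ /=; rewrite -cats1 labs_cat labs_cons /=.
  by rewrite perm_catC.
case=> // [[l Hl]].
have [/andP [_ Hk] Hv] := mem_vforest Hl; rewrite subn0 add0n in Hk Hv.
rewrite (add_forest_cons e p (ENode l [::]) Hk).
have -> : labs ts = labs (take k ts) ++ map snd (vtree (nth (ENode l [::]) ts k)) ++ labs (drop k.+1 ts).
  by rewrite -{1}(cat_take_drop k ts) (drop_nth (ENode l [::]) Hk) labs_cat labs_cons.
move: Hv; case: (nth _ ts k) => l0 ch Hv.
rewrite !labs_cat !labs_cons !labs_vtree.
apply: (perm_trans (y := labs (take k ts) ++ (l0 :: e :: labs ch) ++ labs (drop k.+1 ts))).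
  rewrite perm_cat2l perm_cat2r perm_cons IH //.
  move: Hv; rewrite vtree_eq in_cons => /orP [/eqP [-> _] | H]; first by left.
  by right; exists l.
move: (labs ch) (labs (take k ts)) (labs (drop k.+1 ts)) => B A D.
by apply/permP => f; rewrite /= !count_cat /=; lia.
Qed.

Lemma vforest_nil j (ts : seq (etree m)) l : (([::] : seq nat), l) \notin vforest_from j ts.
Proof.
elim: ts j => [|c cs IH] j //=.
by rewrite mem_cat negb_or IH andbT; apply/mapP => [[q _ []]].
Qed.

Lemma split_at T (ts : seq T) k : (k < size ts)%N ->
  exists A t D, ts = A ++ t :: D /\ size A = k.
Proof.
elim: ts k => [|c cs IH] [|k] //= Hk.
  by exists [::], c, cs.
have [A [t [D [-> <-]]]] := IH k Hk.
by exists (c :: A), t, D.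
Qed.

Lemma all_label (G : {set 'I_m}) (s : seq (etree m)) :
  all (fun c => label c \in G) s = all (fun l => l \in G) (map (@label m) s).
Proof. by rewrite all_map. Qed.

Lemma wf_add e k p (ts : seq (etree m)) l :
  (k :: p, l) \in vforest ts -> e \in GammaP vbl l -> all (wf_tree vbl) ts ->
  all (wf_tree vbl) (add_forest e (k :: p) ts) &&
  (map (@label m) (add_forest e (k :: p) ts) == map (@label m) ts).
Proof.
elim: p k ts l => [|k' p IH] k ts l Hl He Hwf.
all: have [/andP [_ Hk] Hv] := mem_vforest Hl; rewrite subn0 add0n in Hk Hv.
all: rewrite (add_forest_cons e _ (ENode l [::]) Hk).
all: have [A [t [D [Ets HA]]]] := split_at Hk.
all: have HD : drop (size A).+1 (A ++ t :: D) = D by elim: (A) => [|? ? ?] /=; rewrite ?drop0.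
all: move: Hv Hwf; rewrite Ets -HA take_size_cat // nth_cat ltnn subnn /= HD.
all: case: t {Ets HD} => l0 ch Hv.
all: rewrite !all_cat !map_cat /= => /andP [-> /andP [/andP [Hl0 Hch] ->]] /=; rewrite ?andbT.
- rewrite vtree_eq in_cons (negbTE (vforest_nil _ _ _)) orbF in Hv.
  move: Hv => /eqP [Hll]; subst l0.
  by rewrite eqxx andbT !all_rcons He Hl0 Hch.
- rewrite vtree_eq in_cons /= in Hv.
  have /andP [H1 /eqP H2] := IH k' ch l Hv He Hch.
  rewrite H1 eqxx !andbT. have HH : all (fun c => label c \in GammaP vbl l0) (add_forest e (k' :: p) ch) by rewrite all_label H2 -all_label. exact HH.
Qed.

Fixpoint incl (S : {set 'I_n}) (X : seq 'I_m) (L : seq 'I_m) : seq 'I_m :=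
  match L with
  | [::] => [::]
  | e :: L' => if has (fun l => e \in GammaP vbl l) X || (vbl e :&: S != set0)
               then e :: incl S (e :: X) L' else incl S X L'
  end.

Lemma incl_eqi S X Y L : X =i Y -> incl S X L = incl S Y L.
Proof.
elim: L X Y => [|e L IH] X Y HXY //=.
rewrite (eq_has_r HXY); case: ifP => _; last exact: IH.
by congr (_ :: _); apply: IH => z; rewrite !in_cons HXY.
Qed.

Lemma has_cand e (ts : seq (etree m)) :
  ([seq q <- vforest ts | e \in GammaP vbl q.2] != [::]) =
  has (fun l => e \in GammaP vbl l) (labs ts).
Proof. by rewrite /labs has_map -has_filter. Qed.

Lemma process_labs S L ts res : process vbl S L ts res ->
  perm_eq (labs res) (labs ts ++ incl S (labs ts) L).
Proof.
elim: L ts => [|e L IH] ts /=; first by move=> ->; rewrite cats0.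
move=> [ts' [Hat Hpr]]; have := IH _ Hpr.
move: Hat; rewrite /attach has_cand.
have step : forall ts', perm_eq (labs ts') (e :: labs ts) ->
  perm_eq (labs res) (labs ts' ++ incl S (labs ts') L) ->
  perm_eq (labs res) (labs ts ++ e :: incl S (e :: labs ts) L).
  move=> {Hpr} ts' Hp H; apply: (perm_trans H).
  rewrite (incl_eqi _ _ (perm_mem Hp)).
  move: Hp; move: (labs ts') (labs ts) (incl _ _ _) => A B I Hp.
  apply/permP => f; move/permP: Hp => /(_ f).
  by rewrite !count_cat /=; lia.
case: ifP => Hc.
  move=> [q [Hq [_ ->]]]; rewrite orTb; apply: step; apply: labs_add; right.
  by exists q.2; move: Hq; rewrite mem_filter => /andP [_]; case: q.
case: ifP => HS.
  move=> ->; apply: step; exact: labs_add (or_introl erefl).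
by move=> ->.
Qed.

Lemma all_labelP (P : 'I_m -> bool) (s : seq (etree m)) :
  all (fun c => P (label c)) s = all P (map (@label m) s).
Proof. by rewrite all_map. Qed.

Lemma process_inv S L ts res : process vbl S L ts res ->
  all (fun c => vbl (label c) :&: S != set0) ts -> all (wf_tree vbl) ts ->
  all (fun c => vbl (label c) :&: S != set0) res /\ all (wf_tree vbl) res.
Proof.
elim: L ts => [|e L IH] ts /=; first by move=> ->.
move=> [ts' [Hat Hpr]] H1 H2; apply: (IH _ Hpr).
all: move: Hat; rewrite /attach; case: ifP => Hc.
1,3: move=> [[[|k p] l] [Hq [_ ->]]]; move: Hq; rewrite mem_filter /= => /andP [He Hq];
     first by rewrite (negbTE (vforest_nil _ _ _)) in Hq.
1,2: have /andP [W1 /eqP W2] := wf_add Hq He H2.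
- by rewrite (all_labelP (fun l => vbl l :&: S != set0)) W2 -all_labelP.
- by [].
all: case: ifP => HS; last by move=> ->.
all: move=> -> /=.
- by rewrite all_rcons /= HS.
- by rewrite all_rcons /= H2.
Qed.

Lemma exists_max (A : eqType) (s : seq A) (f : A -> nat) : s != [::] ->
  exists q, q \in s /\ forall q', q' \in s -> (f q' <= f q)%N.
Proof.
elim: s => [|a s IH] // _.
case: (altP (s =P [::])) => [-> | /IH [q [Hq Hmax]]].
  by exists a; split; rewrite ?mem_head // => q'; rewrite inE => /eqP ->.
case: (leqP (f a) (f q)) => Ha.
  exists q; split; first by rewrite inE Hq orbT.
  by move=> q'; rewrite inE => /orP [/eqP -> // | /Hmax].
exists a; split; first exact: mem_head.
move=> q'; rewrite inE => /orP [/eqP -> // | /Hmax H]; exact: leq_trans H (ltnW Ha).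
Qed.

Lemma process_ex S L (ts : seq (etree m)) : exists res, process vbl S L ts res.
Proof.
elim: L ts => [|e L IH] ts /=; first by exists ts.
suff [ts' Hat] : exists ts', attach vbl S e ts ts'.
  by have [res Hres] := IH ts'; exists res, ts'.
rewrite /attach /=; case: (boolP ([seq q <- vforest ts | e \in GammaP vbl q.2] != [::])) => Hc.
  have [q [Hq Hmax]] := exists_max (fun q : seq nat * 'I_m => size q.1) Hc.
  by exists (add_forest e q.1 ts), q; split => //; split.
by case: (boolP (vbl e :&: S != set0)) => _; eexists.
Qed.

End Trees.


Section Comb.
Variables (n m : nat) (vbl : 'I_m -> {set 'I_n}) (R : realDomainType).
Local Open Scope ring_scope.

Lemma incl_union (f : 'I_m -> R) (S1 S2 : {set 'I_n}) X X1 X2 L :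
  (forall e, 0 <= f e) ->
  (forall g, has (fun l => g \in GammaP vbl l) X =
             has (fun l => g \in GammaP vbl l) X1 || has (fun l => g \in GammaP vbl l) X2) ->
  [/\ \sum_(e <- incl vbl (S1 :|: S2) X L) f e <=
        \sum_(e <- incl vbl S1 X1 L) f e + \sum_(e <- incl vbl S2 X2 L) f e,
      {subset incl vbl S1 X1 L <= incl vbl (S1 :|: S2) X L} &
      {subset incl vbl S2 X2 L <= incl vbl (S1 :|: S2) X L}].
Proof.
move=> f0; elim: L X X1 X2 => [|e L IH] X X1 X2 Hinv /=.
  by rewrite !big_nil addr0.
rewrite Hinv setIUr setU_eq0 negb_and.
case E1: (has (fun l => e \in GammaP vbl l) X1 || (vbl e :&: S1 != set0)); case E2: (has (fun l => e \in GammaP vbl l) X2 || (vbl e :&: S2 != set0)).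
- have [H1 H2 H3] : _ := IH (e :: X) (e :: X1) (e :: X2)
    ltac:(by move=> g /=; rewrite Hinv; case: (g \in GammaP vbl e)).
  rewrite (_ : (_ || _) = true); last by move: E1 E2; do 2 case: (has _ _); do 2 case: (_ != _).
  rewrite !big_cons; split.
  + by have := f0 e; lra.
  + by move=> z; rewrite !inE => /orP [-> // | /H2 ->]; rewrite orbT.
  + by move=> z; rewrite !inE => /orP [-> // | /H3 ->]; rewrite orbT.
- have [H1 H2 H3] : _ := IH (e :: X) (e :: X1) X2
    ltac:(by move=> g /=; rewrite Hinv orbA).
  rewrite (_ : (_ || _) = true); last by move: E1 E2; do 2 case: (has _ _); do 2 case: (_ != _).
  rewrite !big_cons; split.
  + by lra.
  + by move=> z; rewrite !inE => /orP [-> // | /H2 ->]; rewrite orbT.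
  + by move=> z /H3; rewrite inE => ->; rewrite orbT.
- have [H1 H2 H3] : _ := IH (e :: X) X1 (e :: X2)
    ltac:(by move=> g /=; rewrite Hinv orbCA).
  rewrite (_ : (_ || _) = true); last by move: E1 E2; do 2 case: (has _ _); do 2 case: (_ != _).
  rewrite !big_cons; split.
  + by lra.
  + by move=> z /H2; rewrite inE => ->; rewrite orbT.
  + by move=> z; rewrite !inE => /orP [-> // | /H3 ->]; rewrite orbT.
- have [H1 H2 H3] : _ := IH X X1 X2 Hinv.
  rewrite (_ : (_ || _) = false); last by move: E1 E2; do 2 case: (has _ _); do 2 case: (_ != _).
  by split.
Qed.

End Comb.

Section Leaf.
Variables (n m : nat) (vbl : 'I_m -> {set 'I_n}).

Lemma setI1_neq0 (A : {set 'I_n}) p : (A :&: [set p] != set0) = (p \in A).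
Proof.
apply/set0Pn/idP => [[x] | Hp]; first by rewrite inE in_set1 => /andP [Hx /eqP <-].
by exists p; rewrite inE in_set1 Hp eqxx.
Qed.

Lemma key_dep p a e : p \in vbl a ->
  (e \in GammaP vbl a) || (vbl e :&: [set p] != set0) = (vbl e :&: vbl a != set0).
Proof.
move=> Hp; rewrite setI1_neq0 /GammaP /Gamma !inE.
case: (altP (e =P a)) => [-> | Hne] /=.
  by symmetry; apply/set0Pn; exists p; rewrite inE Hp.
rewrite setIC; apply/idP/idP => [/orP [] // He | ->] //.
by apply/set0Pn; exists p; rewrite inE He Hp.
Qed.

Lemma incl_shift p a X L : p \in vbl a ->
  incl vbl [set p] (a :: X) L = incl vbl (vbl a) X L.
Proof.
move=> Hp; elim: L X => [|e L IH] X //=.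
rewrite -orbA (orbC (has _ X)) orbA key_dep // (orbC _ (has _ X)).
case: ifP => _ //; congr (_ :: _).
by rewrite -IH; apply: incl_eqi => z; rewrite !inE orbCA.
Qed.

End Leaf.

Definition Lt (m : nat) (C : nat -> option 'I_m) (t : nat) := pmap C (rev (iota 1 t.-1)).

Lemma Lt_succ m (C : nat -> option 'I_m) t :
  Lt C t.+2 = oapp (cons^~ (Lt C t.+1)) (Lt C t.+1) (C t.+1).
Proof.
rewrite /Lt (_ : (t.+2).-1 = t + 1)%N; last by rewrite addn1.
rewrite iotaD rev_cat add1n.
by [].
Qed.

Lemma leaf_dec n m (vbl : 'I_m -> {set 'I_n}) (C : nat -> option 'I_m) p t :
  incl vbl [set p] [::] (Lt C t) = [::] \/
  exists t' a', [/\ (0 < t' < t)%N, C t' = Some a', p \in vbl a' &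
    incl vbl [set p] [::] (Lt C t) = a' :: incl vbl (vbl a') [::] (Lt C t')].
Proof.
case: t => [|t]; first by left.
elim: t => [|t IH]; first by left.
rewrite Lt_succ; case E: (C t.+1) => [a|] /=; last first.
  case: IH => [-> | [t' [a' [Ht HC Hp HL]]]]; [by left | right].
  by exists t', a'; split => //; move: Ht => /andP [-> /ltnW].
case Hp: (p \in vbl a).
  right; exists t.+1, a; split => //; first by rewrite ltnSn.
  by rewrite setI1_neq0 Hp /= incl_shift.
rewrite setI1_neq0 Hp /=.
case: IH => [-> | [t' [a' [Ht HC Hp' HL]]]]; [by left | right].
by exists t', a'; split => //; move: Ht => /andP [-> /ltnW].
Qed.

Local Open Scope ring_scope.

Section Real.
Variables (R : realType) (n m : nat) (vbl : 'I_m -> {set 'I_n}) (x : 'I_m -> R).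
Hypothesis hx : forall i, 0 < x i < 1.

Lemma xp_pos i : 0 < xp vbl x i.
Proof.
rewrite /xp mulr_gt0 //; first by case/andP: (hx i).
by apply: prodr_gt0 => j _; rewrite subr_gt0; case/andP: (hx j).
Qed.

Lemma xp_le1 i : xp vbl x i <= 1.
Proof.
have [h1 h2] := andP (hx i).
apply: mulr_ile1; [exact: ltW h1 | | exact: ltW h2 |].
- by apply: prodr_ge0 => j _; rewrite subr_ge0; case/andP: (hx j) => _ /ltW.
- apply: prodr_ile1 => j _; case/andP: (hx j) => a b.
  by rewrite subr_ge0 (ltW b) /= lerBlDr lerDl (ltW a).
Qed.

Lemma ln2_gt0 : 0 < ln (2 : R).
Proof. by apply: ln_gt0; rewrite ltr1n. Qed.

Lemma wgt_ge0 i : 0 <= wgt vbl x i.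
Proof.
rewrite /wgt /log2 oppr_ge0 ler_pdivrMr ?ln2_gt0 // mul0r.
exact: ln_le0 (xp_le1 i).
Qed.

Lemma log2_le (a b : R) : 0 < a -> a <= b -> log2 a <= log2 b.
Proof.
move=> a0 ab; rewrite /log2 ler_pM2r ?invr_gt0 ?ln2_gt0 //.
by rewrite ler_ln // posrE (lt_le_trans a0 ab).
Qed.

Lemma wgt_bar i : in_bar vbl x i -> wgt vbl x i <= log2 (4 * m)%:R.
Proof.
rewrite /in_bar /wgt /log2 => Hb.
have m0 : (0 < m)%N by case: (i) => k /= Hk; exact: leq_ltn_trans (leq0n k) Hk.
have h4 : (0 : R) < (4 * m)%:R by rewrite ltr0n muln_gt0.
have H : ln ((4 * m)%:R^-1) <= ln (xp vbl x i) by rewrite ler_ln // posrE ?invr_gt0 ?xp_pos.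
rewrite lnV ?posrE // in H.
by rewrite -mulNr ler_pM2r ?invr_gt0 ?ln2_gt0 //; lra.
Qed.

End Real.

Lemma sub_btree n (b0 : btree n) S : S \in blabels b0 ->
  exists b, blabel b = S /\ {subset blabels b <= blabels b0}.
Proof.
elim: b0 => [p | l IHl r IHr] /=.
  by rewrite inE => /eqP ->; exists (BLeaf p); split.
rewrite inE mem_cat => /orP [/eqP -> | /orP [/IHl | /IHr] [b [Hb Hs]]].
- by exists (BNode l r); split.
- by exists b; split => // z /Hs Hz; rewrite inE mem_cat Hz orbT.
- by exists b; split => // z /Hs Hz; rewrite inE mem_cat Hz !orbT.
Qed.

Lemma ar1 (R : realType) (g : R) : 0 <= g -> 2 * g < 0 -> False.
Proof. lra. Qed.
Lemma ar2 (R : realType) (g a b : R) : a <= g -> 2 * g < a + b -> g <= b.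
Proof. lra. Qed.
Lemma ar3 (R : realType) (g u s1 s2 : R) : u <= s1 + s2 -> 2 * g < u -> s1 < g -> s2 < g -> False.
Proof. lra. Qed.

Section Main.
Variables (R : realType) (n m : nat) (vbl : 'I_m -> {set 'I_n}) (Bt : 'I_m -> btree n)
  (C : nat -> option 'I_m) (w : 'I_m -> R) (gam : R) (bar : pred 'I_m).
Hypotheses (w0 : forall e, 0 <= w e) (wbar : forall e, bar e -> w e <= gam)
  (g0 : 0 <= gam) (hBt : forall i, blabel (Bt i) = vbl i).

Definition W t S := \sum_(e <- incl vbl S [::] (Lt C t)) w e.

Definition Good := exists t' a' S', [/\ C t' = Some a', S' \in blabels (Bt a') &
  gam <= W t' S' <= 2 * gam].

Lemma main_ind t a b : C t = Some a -> {subset blabels b <= blabels (Bt a)} ->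
  gam <= W t (blabel b) -> all bar (incl vbl (blabel b) [::] (Lt C t)) -> Good.
Proof.
elim/ltn_ind: t a b => t IHt a b.
elim: b => [p | l IHl r IHr] HC Hsub HW Hbar.
- case: (lerP (W t (blabel (BLeaf p))) (2 * gam)) => H2.
    by exists t, a, (blabel (BLeaf p)); split => //; [apply: Hsub; exact: mem_head | rewrite HW].
  move: HW H2 Hbar; rewrite /W /=.
  case: (leaf_dec vbl C p t) => [-> | [t' [a' [Ht HC' Hp HL]]]].
    by rewrite big_nil => _ H; case: (ar1 g0 H).
  rewrite HL big_cons /= => _ H2 /andP [Ha' Hbar'].
  apply: (IHt t' _ a' (Bt a')) => //.
  + by case/andP: Ht.
  + by rewrite /W hBt; exact: ar2 (wbar Ha') H2.
  + by rewrite hBt.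
- case: (lerP (W t (blabel (BNode l r))) (2 * gam)) => H2.
    by exists t, a, (blabel (BNode l r)); split => //; [apply: Hsub; exact: mem_head | rewrite HW].
  have [U1 U2 U3] := @incl_union _ _ vbl _ w (blabel l) (blabel r) [::] [::] [::] (Lt C t) w0 (fun _ => erefl).
  have Hsl : {subset blabels l <= blabels (Bt a)}.
    by move=> z Hz; apply: Hsub; rewrite /= inE mem_cat Hz orbT.
  have Hsr : {subset blabels r <= blabels (Bt a)}.
    by move=> z Hz; apply: Hsub; rewrite /= inE mem_cat Hz !orbT.
  rewrite /= in Hbar HW H2.
  case: (lerP gam (W t (blabel l))) => Hl.
    apply: IHl => //; apply/allP => z /U2 Hz; exact: (allP Hbar).
  case: (lerP gam (W t (blabel r))) => Hr.
    apply: IHr => //; apply/allP => z /U3 Hz; exact: (allP Hbar).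
  case: (ar3 U1 H2 Hl Hr).
Qed.

End Main.

Lemma weight_eq (R : realType) n m (vbl : 'I_m -> {set 'I_n}) (x : 'I_m -> R) S L res :
  process vbl S L [::] res ->
  weight vbl x (S, res) = \sum_(e <- incl vbl S [::] L) wgt vbl x e.
Proof.
move=> /process_labs Hp; rewrite /weight /=.
rewrite -(big_map snd xpredT (wgt vbl x)); exact: perm_big Hp.
Qed.

Lemma allbar_eq (R : realType) n m (vbl : 'I_m -> {set 'I_n}) (x : 'I_m -> R) S L res :
  process vbl S L [::] res ->
  all_bar vbl x (S, res) = all (in_bar vbl x) (incl vbl S [::] L).
Proof.
move=> /process_labs Hp; rewrite /all_bar /= -(all_map snd (in_bar vbl x)).
exact: perm_all Hp.
Qed.

Theorem lemma3p2 (R : realType) (n m : nat) (D : 'I_n -> finType)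
  (A : 'I_m -> (forall p, D p) -> bool) (vbl : 'I_m -> {set 'I_n})
  (Bt : 'I_m -> btree n) (x : 'I_m -> R) (eps : R)
  (T : forall p : 'I_n, nat -> D p) (rule : ('I_n -> nat) -> option 'I_m) :
  (forall i j, A i =1 A j -> i = j) ->
  (forall i, is_vbl A vbl i) ->
  (forall i, bvalid (Bt i) /\ blabel (Bt i) = vbl i) ->
  0 < eps < 1 ->
  (forall i, 0 < x i < 1) ->
  rule_spec A T rule ->
  let C := event_log vbl rule in
  let gamma := log2 (Mconst vbl x) / eps in
  (exists tau : pwt n m, is_pwt vbl Bt tau /\ occurs vbl Bt C tau /\
      gamma <= weight vbl x tau /\ all_bar vbl x tau) ->
  exists tau : pwt n m, is_pwt vbl Bt tau /\ occurs vbl Bt C tau /\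
      gamma <= weight vbl x tau <= 2 * gamma.
Proof.
move=> _ _ HBt Heps hx _ C gam [[S ts] [_ [[t [a [HC [HS Hpr]]]] [Hw Hab]]]].
simpl in HS, Hpr.
have hBt : forall i, blabel (Bt i) = vbl i by move=> i; case: (HBt i).
have m0 : (0 < m)%N by case: (a) => k /= Hk; exact: leq_ltn_trans (leq0n k) Hk.
have h4 : (0 : R) < (4 * m)%:R by rewrite ltr0n muln_gt0.
have h4M : (4 * m)%:R <= Mconst vbl x by rewrite /Mconst !le_max lexx !orbT.
have l4 : 0 <= log2 ((4 * m)%:R : R).
  rewrite /log2 divr_ge0 //; last exact: (ltW (ln2_gt0 R)).
  by apply: ln_ge0; rewrite ler1n muln_gt0.
have lM : log2 ((4 * m)%:R : R) <= log2 (Mconst vbl x) by apply: log2_le.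
have [e0 e1] := andP Heps.
have gM : log2 (Mconst vbl x) <= gam.
  rewrite /gam ler_pdivlMr //.
  have : 0 <= log2 (Mconst vbl x) by apply: le_trans l4 lM.
  move: e1; clear; nra.
have g0 : 0 <= gam by apply: le_trans gM; apply: le_trans l4 lM.
have wbar : forall e, in_bar vbl x e -> wgt vbl x e <= gam.
  move=> e /(wgt_bar hx) He; apply: le_trans He _; exact: le_trans lM gM.
have [b [Hb Hsub]] := sub_btree HS.
have [t' [a' [S' [HC' HS' HW']]]] : Good vbl Bt C (wgt vbl x) gam.
  apply: (main_ind (wgt_ge0 vbl hx) wbar g0 hBt HC Hsub).
    by rewrite /W Hb -(weight_eq x Hpr).
  by rewrite Hb -(allbar_eq x Hpr).
have [res Hres] := process_ex vbl S' (Lt C t') [::].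
exists (S', res); split; last split.
- split; first by exists a'.
  by have [] := process_inv Hres.
- by exists t', a'.
- by rewrite (weight_eq x Hres).
Qed.
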